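(* Let $G$ be a connected graph, $S$ a separating vertex set of $G$, and $V_1,\ldots,V_k$ the vertex sets of the connected components of $G-S$. Suppose each vertex of $S$ has a neighbor in each $V_i$, $1\leq i\leq k$. Then every connected forcing set of $G$ contains a vertex from at least $k-1$ of the sets $V_1,\ldots,V_k$. Moreover, if either $k=2$ and $Z(G[V_i])>|S|$ for both $i\in\{1,2\}$, or $k\geq 3$, then every connected forcing set of $G$ contains a vertex of $S$.
   Context: Zero forcing: given a graph $H$ and a set $T$ of initially colored vertices, if a colored vertex $u$ has exactly one uncolored neighbor $v$, then $v$ becomes colored. $T$ is a zero forcing set if repeated application colors all vertices; $Z(H)$ is the minimum size of a zero forcing set of $H$. A connected forcing set is a zero forcing set $T$ with $G[T]$ connected. *)

(* Defs.v *)
(* A finite simple graph is a symmetric irreflexive e : rel T. *)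
From mathcomp Require Import all_boot.
Set Implicit Arguments. Unset Strict Implicit. Unset Printing Implicit Defensive.

Section ZeroForcing.
Variables (T : finType) (e : rel T).

Definition induced_rel (A : {set T}) : rel T :=
  [rel x y | [&& e x y, x \in A & y \in A]].

Definition connected_in (A : {set T}) : Prop :=
  forall x y, x \in A -> y \in A -> connect (induced_rel A) x y.

Definition uncolored_nbrs (A C : {set T}) (u : T) : {set T} :=
  [set w in A | e u w] :\: C.

Definition force_step (A C : {set T}) : {set T} :=
  C :|: [set v | [exists u in C :&: A, uncolored_nbrs A C u == [set v]]].

(* final colored set: after #|T| rounds the process has stabilized *)
Definition zf_closure (A X : {set T}) : {set T} := iter #|T| (force_step A) X.

Definition zero_forcing_set (A X : {set T}) : bool :=
  (X \subset A) && (zf_closure A X == A).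

(* Z(G[A]); A itself is always a zero forcing set, hence the default #|A| *)
Definition zf_number (A : {set T}) : nat :=
  \big[minn/#|A|]_(X : {set T} | zero_forcing_set A X) #|X|.

Definition connected_forcing_set (X : {set T}) : Prop :=
  zero_forcing_set setT X /\ connected_in X.

Definition comp_of (S : {set T}) (x : T) : {set T} :=
  [set y | (y \notin S) && connect (induced_rel (~: S)) x y].

Definition components_minus (S : {set T}) : {set {set T}} :=
  [set comp_of S x | x in ~: S].

End ZeroForcing.

(* Main.v *)
Require Import Defs.
From mathcomp Require Import all_boot zify.
Set Implicit Arguments. Unset Strict Implicit. Unset Printing Implicit Defensive.

Lemma induced_sym (T : finType) (e : rel T) (A : {set T}) :
  symmetric e -> symmetric (induced_rel e A).
Proof. by move=> es x y; rewrite /induced_rel /= es; case: (x \in A); case: (y \in A); rewrite ?andbF. Qed.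

Lemma comp_eq (T : finType) (e : rel T) (S : {set T}) x y :
  symmetric e -> y \in comp_of e S x -> comp_of e S y = comp_of e S x.
Proof.
move=> es; rewrite inE => /andP[_ cxy].
have cs := sym_connect_sym (induced_sym (~: S) es).
apply/setP=> z; rewrite !inE; congr (_ && _); apply/idP/idP => h.
  exact: connect_trans cxy h.
by apply: connect_trans h; rewrite cs.
Qed.

Lemma comp_adj (T : finType) (e : rel T) (S : {set T}) x u v :
  symmetric e -> u \notin S -> v \in comp_of e S x -> e u v -> u \in comp_of e S x.
Proof.
move=> es uS; rewrite !inE => /andP[vS cxv] euv; rewrite uS /=.
apply: connect_trans cxv (connect1 _).
by rewrite /induced_rel /= es euv !inE uS vS.
Qed.

Lemma comps_mem (T : finType) (e : rel T) (S : {set T}) V :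
  V \in components_minus e S -> exists2 x, x \notin S & V = comp_of e S x.
Proof. by case/imsetP=> x; rewrite inE => xS ->; exists x. Qed.

Lemma comps_disj (T : finType) (e : rel T) (S : {set T}) V W y :
  symmetric e -> V \in components_minus e S -> W \in components_minus e S ->
  y \in V -> y \in W -> V = W.
Proof.
move=> es /comps_mem[a _ ->] /comps_mem[b _ ->] ya yb.
by rewrite -(comp_eq es ya) (comp_eq es yb).
Qed.

Lemma comps_nonempty (T : finType) (e : rel T) (S : {set T}) V :
  V \in components_minus e S -> exists x, x \in V.
Proof. by case/comps_mem=> x xS ->; exists x; rewrite inE xS connect0. Qed.

Lemma comps_adj (T : finType) (e : rel T) (S : {set T}) V u v :
  symmetric e -> V \in components_minus e S -> u \notin S -> v \in V -> e u v -> u \in V.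
Proof. by move=> es /comps_mem[x _ ->]; apply: comp_adj. Qed.

Definition C (T : finType) (e : rel T) X t := iter t (force_step e setT) X.

Lemma C_mono (T : finType) (e : rel T) X t t' : t <= t' -> C e X t \subset C e X t'.
Proof.
move=> /subnK <-; elim: (t' - t) => [|n IH] /=; first by rewrite add0n.
by apply: subset_trans IH (subsetUl _ _).
Qed.

Lemma unc_mono (T : finType) (e : rel T) A (C1 C2 : {set T}) u :
  C1 \subset C2 -> uncolored_nbrs e A C2 u \subset uncolored_nbrs e A C1 u.
Proof. by move=> h; rewrite /uncolored_nbrs setDS. Qed.

Lemma step_mem (T : finType) (e : rel T) A (Y : {set T}) v :
  v \in force_step e A Y -> v \notin Y ->
  exists2 u, u \in Y :&: A & uncolored_nbrs e A Y u = [set v].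
Proof.
rewrite /force_step inE => /orP[->//|]; rewrite inE => /exists_inP[u uY /eqP h] _.
by exists u.
Qed.

Lemma core1 (T : finType) (e : rel T) (S X : {set T}) V W :
  symmetric e ->
  (forall s, s \in S -> forall V, V \in components_minus e S ->
             exists2 v, v \in V & e s v) ->
  V \in components_minus e S -> W \in components_minus e S -> V != W ->
  V :&: X = set0 -> W :&: X = set0 -> zf_closure e setT X != setT.
Proof.
move=> es Sadj Vc Wc VW VX WX.
have key : forall t, C e X t :&: (V :|: W) = set0.
  elim=> [|t IH]; first by rewrite /C /= setIUr setIC VX setIC WX setU0.
  apply/setP=> v; rewrite inE in_set0; apply/negP=> /andP[vC vD].
  have vnC : v \notin C e X t.
    by apply/negP=> vC'; move/setP: IH => /(_ v); rewrite inE vC' vD in_set0.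
  have [u uC hu] := step_mem vC vnC.
  have : v \in uncolored_nbrs e setT (C e X t) u by rewrite hu set11.
  rewrite /uncolored_nbrs !inE => /andP[_ euv].
  have uD : u \notin V :|: W.
    apply/negP=> uD; move/setP: IH => /(_ u); rewrite inE uD andbT in_set0.
    by move: uC; rewrite inE => /andP[-> _].
  have uS : u \in S.
    apply: contraR uD => uS; rewrite inE.
    by case/setUP: vD => vV; [rewrite (comps_adj es Vc uS vV euv) | rewrite (comps_adj es Wc uS vV euv) orbT].
  have [a aV eua] := Sadj u uS V Vc.
  have [b bW eub] := Sadj u uS W Wc.
  have notC y : y \in V :|: W -> y \notin C e X t.
    by move=> yD; apply/negP=> yC; move/setP: IH => /(_ y); rewrite inE yC yD in_set0.
  have : a \in [set v] by rewrite -hu /uncolored_nbrs !inE eua notC // inE aV.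
  have : b \in [set v] by rewrite -hu /uncolored_nbrs !inE eub notC // inE bW orbT.
  rewrite !inE => /eqP bv /eqP av; subst a b.
  by move: VW; rewrite (comps_disj es Vc Wc aV bW) eqxx.
apply/negP=> /eqP h; have [x xV] := comps_nonempty Vc.
move/setP: (key #|T|) => /(_ x); rewrite /C -/(zf_closure e setT X) h !inE xV.
by [].
Qed.

Lemma step_grow (T : finType) (e : rel T) (A Y : {set T}) : Y \subset force_step e A Y.
Proof. exact: subsetUl. Qed.

Lemma closure_fix (T : finType) (e : rel T) (A X : {set T}) :
  force_step e A (zf_closure e A X) = zf_closure e A X.
Proof.
set f := force_step e A.
have H n : iter n.+1 f X = iter n f X \/ n < #|iter n.+1 f X|.
  elim: n => [|n [IH|IH]].
  - have [->|ne] := eqVneq (iter 1 f X) (iter 0 f X); first by left.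
    right; apply: (leq_ltn_trans (leq0n #|iter 0 f X|)); apply: proper_card.
    by rewrite properEneq eq_sym ne step_grow.
  - by left; rewrite iterS IH.
  - have [->|ne] := eqVneq (iter n.+2 f X) (iter n.+1 f X); first by left.
    right; apply: (leq_ltn_trans IH); apply: proper_card.
    by rewrite properEneq eq_sym ne iterS step_grow.
case: (H #|T|) => [h|]; first by rewrite /zf_closure -/f -iterS h.
by rewrite ltnNge max_card.
Qed.

Lemma closure_sub (T : finType) (e : rel T) (A X : {set T}) :
  X \subset A -> zf_closure e A X \subset A.
Proof.
move=> XA; rewrite /zf_closure; elim: #|T| => //= n IH.
rewrite /force_step subUset IH /=; apply/subsetP=> v.
rewrite inE => /exists_inP[u _ /eqP h].
have : v \in uncolored_nbrs e A (iter n (force_step e A) X) u by rewrite h set11.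
by rewrite /uncolored_nbrs !inE => /andP[_ /andP[]].
Qed.

Lemma closure_grow (T : finType) (e : rel T) (A X : {set T}) :
  X \subset zf_closure e A X.
Proof.
rewrite /zf_closure; elim: #|T| => //= n IH; exact: subset_trans IH (step_grow _ _ _).
Qed.

Lemma zf_le (T : finType) (e : rel T) (A F : {set T}) :
  zero_forcing_set e A F -> zf_number e A <= #|F|.
Proof.
move=> h; rewrite /zf_number.
have : F \in index_enum {set T} by rewrite mem_index_enum.
elim: (index_enum _) => [//|a r IH]; rewrite inE big_cons.
case/orP=> [/eqP<-|Fr]; first by rewrite h geq_minl.
case: (zero_forcing_set e A a); last exact: IH.
by apply: leq_trans (geq_minr _ _) (IH Fr).
Qed.

Lemma core2 (T : finType) (e : rel T) (S X : {set T}) V :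
  symmetric e -> V \in components_minus e S -> V :&: X = set0 ->
  zf_closure e setT X = setT -> zf_number e V <= #|S|.
Proof.
move=> es Vc VX hcl.
pose P (v s : T) := [exists t : 'I_#|T|, uncolored_nbrs e setT (C e X t) s == [set v]].
pose F := [set v in V | [exists s in S, P v s]].
pose g v := odflt v [pick s in S | P v s].
have FS : #|F| <= #|S|.
  rewrite -(card_in_imset (f := g)).
    apply: subset_leq_card; apply/subsetP=> s /imsetP[v vF ->].
    rewrite /g; case: pickP => [s' /andP[]//|].
    move: vF; rewrite inE => /andP[_ /exists_inP[s0 s0S p]] /(_ s0).
    by rewrite s0S p.
  move=> v w vF wF; rewrite /g.
  case: pickP => [s /andP[sS pv]|]; last first.
    move: vF; rewrite inE => /andP[_ /exists_inP[s0 s0S p]] /(_ s0).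
    by rewrite s0S p.
  case: pickP => [s' /andP[sS' pw]|]; last first.
    move: wF; rewrite inE => /andP[_ /exists_inP[s0 s0S p]] /(_ s0).
    by rewrite s0S p.
  move=> /= ss'; subst s'.
  move: pv pw => /existsP[t1 /eqP h1] /existsP[t2 /eqP h2].
  have [le|le] := leqP t1 t2.
    have := unc_mono e setT s (C_mono e X le); rewrite h1 h2 sub1set inE.
    by move/eqP.
  have := unc_mono e setT s (C_mono e X (ltnW le)); rewrite h1 h2 sub1set inE.
  by move/eqP.
set Y := zf_closure e V F.
have FV : F \subset V by apply/subsetP=> v; rewrite inE => /andP[].
have YV : Y \subset V by apply: closure_sub.
have fixY := closure_fix e V F; rewrite -/Y in fixY.
have key : forall t, t <= #|T| -> C e X t :&: V \subset Y.
  elim=> [_|t IH tT]; first by rewrite /C /= setIC VX sub0set.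
  apply/subsetP=> v; rewrite inE => /andP[vC vV].
  have [vC'|vnC] := boolP (v \in C e X t).
    by apply: (subsetP (IH (ltnW tT))); rewrite inE vC' vV.
  have [u uC hu] := step_mem vC vnC.
  have : v \in uncolored_nbrs e setT (C e X t) u by rewrite hu set11.
  rewrite /uncolored_nbrs !inE => /andP[_ euv].
  have [uS|uS] := boolP (u \in S).
    apply: (subsetP (closure_grow e V F)); rewrite inE vV /=.
    by apply/exists_inP; exists u => //; apply/existsP; exists (Ordinal tT); rewrite /= hu.
  have uV := comps_adj es Vc uS vV euv.
  have uY : u \in Y by apply: (subsetP (IH (ltnW tT))); rewrite inE uV (subsetP (subsetIl _ _) _ uC).
  apply: contraT => vY; suff : v \in force_step e V Y by rewrite fixY (negbTE vY).
  rewrite inE; apply/orP; right; rewrite inE; apply/exists_inP; exists u; first by rewrite inE uY uV.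
  rewrite eqEsubset sub1set; apply/andP; split; last by rewrite /uncolored_nbrs !inE vV euv vY.
  apply/subsetP=> w; rewrite !inE => /andP[wY /andP[wV euw]].
  have : w \in uncolored_nbrs e setT (C e X t) u; last first.
    by rewrite hu inE.
  rewrite /uncolored_nbrs !inE euw /= andbT; apply: contra wY => wC.
  by apply: (subsetP (IH (ltnW tT))); rewrite inE wC wV.
have YeV : Y = V.
  apply/eqP; rewrite eqEsubset YV /=; apply/subsetP=> v vV.
  apply: (subsetP (key #|T| (leqnn _))); rewrite inE vV andbT.
  by rewrite /C -/(zf_closure e setT X) hcl inE.
apply: leq_trans FS; apply: zf_le.
by rewrite /zero_forcing_set FV -/Y YeV eqxx.
Qed.

Lemma hits_le1 (T : finType) (e : rel T) (S X : {set T}) :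
  symmetric e -> S :&: X = set0 -> connected_in e X ->
  #|[set V in components_minus e S | V :&: X != set0]| <= 1.
Proof.
move=> es SX Xc.
case: (set_0Vmem X) => [->|[x0 x0X]].
  by rewrite (_ : [set _ in _ | _] = set0) ?cards0 //; apply/setP=> V; rewrite !inE setI0 eqxx andbF.
have notS a : a \in X -> a \notin S.
  by move=> aX; apply/negP=> aS; move/setP: SX => /(_ a); rewrite !inE aS aX.
have x0S : x0 \notin S.
  by apply/negP=> xS; move/setP: SX => /(_ x0); rewrite !inE xS x0X.
rewrite -(cards1 (comp_of e S x0)); apply: subset_leq_card; apply/subsetP=> V.
rewrite !inE => /andP[Vc /set0Pn[z /setIP[zV zX]]].
have zS : z \notin S.
  by apply/negP=> zS; move/setP: SX => /(_ z); rewrite !inE zS zX.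
have cz : connect (induced_rel e (~: S)) x0 z.
  apply: connect_sub (Xc x0 z x0X zX) => a b; rewrite /induced_rel /= => /and3P[eab aX bX].
  apply: connect1; rewrite /= eab !inE.
  by rewrite !notS.
have zc : z \in comp_of e S x0 by rewrite inE zS cz.
case/comps_mem: Vc => y _ Vy; subst V.
by rewrite -(comp_eq es zV) (comp_eq es zc).
Qed.

Theorem lemma1 (T : finType) (e : rel T)
  (e_sym : symmetric e) (e_irr : irreflexive e)
  (G_conn : connected_in e [set: T])
  (S : {set T})
  (S_sep : 2 <= #|components_minus e S|)
  (S_adj : forall s, s \in S -> forall V, V \in components_minus e S ->
             exists2 v, v \in V & e s v) :
  forall X : {set T}, connected_forcing_set e X ->
    (#|components_minus e S| - 1 <=
       #|[set V in components_minus e S | V :&: X != set0]|)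
    /\
    ((#|components_minus e S| == 2) &&
       [forall V in components_minus e S, #|S| < zf_number e V]
     || (3 <= #|components_minus e S|) ->
     S :&: X != set0).
Proof.
move=> X [/andP[_ /eqP hcl] Xc].
set cs := components_minus e S.
set H := [set V in cs | V :&: X != set0].
have Hcs : H \subset cs by apply/subsetP=> V; rewrite inE => /andP[].
have cardD : #|cs :\: H| = #|cs| - #|H|.
  by rewrite cardsD (setIidPr Hcs).
have notH V : V \in cs :\: H -> V \in cs /\ V :&: X = set0.
  rewrite !inE => /andP[h Vc]; split=> //; apply/eqP; apply: contraNT h => h.
  by rewrite Vc h.
have P1 : #|cs| - 1 <= #|H|.
  rewrite leqNgt; apply/negP=> lt.
  have : 1 < #|cs :\: H| by rewrite cardD; lia.
  case/card_gt1P=> V [W [/notH[Vc VX] /notH[Wc WX] VW]].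
  by move: (core1 (X:=X) e_sym S_adj Vc Wc VW VX WX); rewrite hcl eqxx.
split=> // hyp; apply: contraT; rewrite negbK => /eqP SX.
have H1 := hits_le1 e_sym SX Xc; rewrite -/cs -/H in H1.
case/orP: hyp => [/andP[/eqP k2 /forall_inP hz]|k3]; last by lia.
have : 0 < #|cs :\: H| by rewrite cardD; lia.
rewrite card_gt0 => /set0Pn[V /notH[Vc VX]].
have := hz V Vc; have := core2 e_sym Vc VX hcl; lia.
Qed.
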